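(* Let $p$ be a prime and $n$ a positive integer. Let $\mathcal M_{p^n}$ be a complete set of pairwise nonisomorphic $\Lambda$-modules $N$ such that $|N|=p^i$ and $|(1-t)N|=p^j$ with $2i-j\le n$ (over all such $i,j$). Then for each $N\in\mathcal M_{p^n}$ there exists a $\Lambda$-module $M_N\supseteq N$ with $|M_N|=p^n$ and $(1-t)M_N=N$, and for any such choice of the $M_N$, the family $\{(M_N,* ):N\in\mathcal M_{p^n}\}$ is a complete set of pairwise nonisomorphic Alexander quandles of order $p^n$.
   Context: $\Lambda=\mathbb Z[t,t^{-1}]$. A quandle is a set $Q$ with a binary operation $*$ such that for all $x,y,z\in Q$: $x*x=x$; $x\mapsto x*y$ is a permutation of $Q$; $(x*y)*z=(x*z)*(y*z)$. Quandles are isomorphic if there is a bijection preserving $*$. The Alexander quandle of a $\Lambda$-module $M$ is $(M,* )$ with $x*y=tx+(1-t)y$. *)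

(* Defs.v *)
From HB Require Import structures.
From mathcomp Require Import all_boot all_order all_algebra.
Set Implicit Arguments. Unset Strict Implicit. Unset Printing Implicit Defensive.
Import GRing.Theory.
Local Open Scope ring_scope.

(* A finite Lambda-module, Lambda = Z[t,t^-1]: a finite abelian group with an
   additive automorphism t. *)
Record LMod := LModPack {
  lcar :> finZmodType;
  tmap : lcar -> lcar;
  tmap_add : forall x y : lcar, tmap (x + y) = tmap x + tmap y;
  tmap_bij : bijective tmap }.

Definition omt (M : LMod) (x : lcar M) : lcar M := x - tmap x.

Definition imB (M : LMod) : {set lcar M} := [set omt x | x : lcar M].

Definition lhom (M N : LMod) (f : lcar M -> lcar N) : Prop :=
  (forall x y, f (x + y) = f x + f y) /\ (forall x, f (tmap x) = tmap (f x)).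

Definition liso (M N : LMod) : Prop :=
  exists f : lcar M -> lcar N, lhom f /\ bijective f.

Definition alex (M : LMod) (x y : lcar M) : lcar M := tmap x + omt y.

Definition qiso (A B : Type) (opA : A -> A -> A) (opB : B -> B -> B) : Prop :=
  exists f : A -> B, bijective f /\ forall x y, f (opA x y) = opB (f x) (f y).

Definition Mcond (p n : nat) (N : LMod) : Prop :=
  exists i j : nat, #|lcar N| = (p ^ i)%N /\ #|imB N| = (p ^ j)%N /\ (2 * i <= n + j)%N.

Definition complete_Mset (p n : nat) (I : Type) (N : I -> LMod) : Prop :=
  [/\ forall i, Mcond p n (N i),
      forall X : LMod, Mcond p n X -> exists i, liso X (N i)
    & forall i j, liso (N i) (N j) -> i = j].

Definition good_ext (p n : nat) (N M : LMod) (f : lcar N -> lcar M) : Prop :=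
  [/\ lhom f, injective f, #|lcar M| = (p ^ n)%N & f @: [set: lcar N] = imB M].

(* Main.v *)
Require Import Defs.
From HB Require Import structures.
From mathcomp Require Import all_boot all_order all_algebra.
From mathcomp Require Import zify.
Set Implicit Arguments. Unset Strict Implicit. Unset Printing Implicit Defensive.
Import GRing.Theory.
Local Open Scope ring_scope.

Section Add.
Variables (A B : zmodType) (phi : A -> B).
Hypothesis hadd : forall x y, phi (x + y) = phi x + phi y.
Lemma add0f : phi 0 = 0.
Proof. by apply/(addrI (phi 0)); rewrite -hadd !addr0. Qed.
Lemma addNf x : phi (- x) = - phi x.
Proof. by apply/(addrI (phi x)); rewrite -hadd !subrr add0f. Qed.
Lemma addBf x y : phi (x - y) = phi x - phi y.
Proof. by rewrite hadd addNf. Qed.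
Lemma addMnf x k : phi (x *+ k) = phi x *+ k.
Proof. elim: k => [|k IH]; first by rewrite !mulr0n add0f. by rewrite !mulrS hadd IH. Qed.
End Add.

Section Count.
Variables (A B : finZmodType) (phi : A -> B).
Hypothesis hadd : forall x y, phi (x + y) = phi x + phi y.
Variable S : {set A}.
Hypothesis S0 : 0 \in S.
Hypothesis SB : {in S &, forall x y, x - y \in S}.

Lemma fiber_card a : a \in S ->
  #|[set x in S | phi x == phi a]| = #|[set x in S | phi x == 0]|.
Proof.
move=> aS.
have -> : [set x in S | phi x == 0] = [set x - a | x in [set x in S | phi x == phi a]].
  apply/setP => z; rewrite !inE; apply/andP/imsetP.
    case=> zS /eqP pz; exists (z + a); last by rewrite addrK.
    rewrite inE hadd pz add0r eqxx andbT.
    have Na : - a \in S by rewrite -sub0r SB.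
    by rewrite -[a]opprK SB.
  case=> x; rewrite inE => /andP[xS /eqP px] ->.
  by rewrite SB // addBf // px subrr.
by rewrite card_imset //; apply: addIr.
Qed.

Lemma card_ker : #|S| = (#|phi @: S| * #|[set x in S | phi x == 0%R]|)%N.
Proof.
rewrite -sum1_card (partition_big_imset phi) /=.
rewrite -sum_nat_const; apply: eq_bigr => j /imsetP [a aS ->].
rewrite -(fiber_card aS) -sum1_card; apply: eq_bigl => x; by rewrite inE.
Qed.
End Count.

Lemma mulr_card (A : finZmodType) (x : A) : x *+ #|A| = 0.
Proof.
have : \sum_(u : A) (u + x) = \sum_(u : A) u.
  by rewrite [RHS](reindex_inj (addIr x)).
rewrite big_split /= sumr_const => /eqP; rewrite -subr_eq0 addrAC subrr add0r.
by move/eqP.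
Qed.

Lemma carry_assoc (m a b e : nat) : (0 < m)%N ->
  ((a + b) %/ m + ((a + b) %% m + e) %/ m = (a + (b + e) %% m) %/ m + (b + e) %/ m)%N.
Proof.
move=> m0.
have H1 : ((a + b) %/ m + ((a + b) %% m + e) %/ m = (a + b + e) %/ m)%N.
  by rewrite {3}(divn_eq (a + b) m) -addnA divnMDl.
have H2 : ((a + (b + e) %% m) %/ m + (b + e) %/ m = (a + b + e) %/ m)%N.
  by rewrite -addnA {3}(divn_eq (b + e) m) addnCA divnMDl // addnC.
by rewrite H1 H2.
Qed.

Lemma sw (V : zmodType) (a b c e f g h : V) : c + f = g + h ->
  a + b + c + e + f = a + (b + e + g) + h.
Proof. by move=> H; rewrite -!addrA -H; congr (_ + (_ + _)); rewrite addrCA. Qed.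

Definition extT (M : finZmodType) (d : nat) (w : M) : Type := (M * 'I_d.+1)%type.

Section Ext.
Variables (M : finZmodType) (d : nat) (w : M).
Local Notation m := d.+1.
Local Notation extT := (@extT M d w).
HB.instance Definition _ := Finite.copy extT (M * 'I_m)%type.

Definition ext_add (u v : extT) : extT :=
  (u.1 + v.1 + w *+ ((u.2 + v.2) %/ m), Ordinal (ltn_pmod (u.2 + v.2) (ltn0Sn d))).
Definition ext_zero : extT := (0, ord0).
Definition ext_opp (u : extT) : extT :=
  (- u.1 - w *+ (0 < u.2)%N, Ordinal (ltn_pmod (m - u.2) (ltn0Sn d))).

Lemma ext_addA : associative ext_add.
Proof.
move=> [x a] [y b] [z e]; rewrite /ext_add /=; congr (_, _).
  symmetry; apply: sw; by rewrite -!mulrnDr carry_assoc // addnC.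
by apply: val_inj => /=; rewrite modnDml modnDmr addnA.
Qed.

Lemma ext_addC : commutative ext_add.
Proof.
move=> [x a] [y b]; rewrite /ext_add /=; congr (_, _).
  by rewrite (addrC x) addnC.
by apply: val_inj => /=; rewrite addnC.
Qed.

Lemma ext_add0 : left_id ext_zero ext_add.
Proof.
move=> [x a]; rewrite /ext_add /= add0r add0n divn_small // mulr0n addr0.
by congr (_, _); apply: val_inj; rewrite /= modn_small.
Qed.

Lemma ext_addN : left_inverse ext_zero ext_opp ext_add.
Proof.
move=> [x a]; rewrite /ext_add /ext_opp /ext_zero /=.
have ha := ltn_ord a.
case: (posnP a) => [a0|apos].
  rewrite a0 subn0 modnn add0n div0n !mulr0n subr0 addr0 addNr.
  by congr (_, _); apply: val_inj.
have hma : ((m - a) %% m + a = m)%N.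
  by rewrite modn_small ?ltn_subrL ?apos // subnK // ltnW.
congr (_, _); last by apply: val_inj; rewrite /= hma modnn.
by rewrite hma divnn /= mulr1n addrAC subrK addNr.
Qed.

HB.instance Definition _ := GRing.isZmodule.Build extT ext_addA ext_addC ext_add0 ext_addN.

Definition ext_in (x : M) : extT := (x, ord0).
Definition ext_z : extT := (0, Ordinal (ltn0Sn d)).

Lemma card_ext : #|{: extT}| = (#|M| * m)%N.
Proof. by rewrite card_prod card_ord. Qed.

Lemma ext_in_add x y : ext_in (x + y) = ext_in x + ext_in y.
Proof.
rewrite /ext_in /= /GRing.add /= /ext_add /= div0n mulr0n addr0.
by congr (_, _); apply: val_inj.
Qed.
Lemma ext_addE (u v : extT) : u + v = ext_add u v.
Proof. by []. Qed.

Lemma ext_in_inj : injective ext_in.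
Proof. by move=> x y []. Qed.

Lemma ext_sig_add (V : zmodType) (sg : M -> V) (y : V) :
  (forall a b, sg (a + b) = sg a + sg b) -> sg w = y *+ m ->
  forall u v : extT, sg (u + v).1 + y *+ (u + v).2 =
     (sg u.1 + y *+ u.2) + (sg v.1 + y *+ v.2).
Proof.
move=> hadd hw [x a] [x' b]; rewrite ext_addE /ext_add /= !hadd.
rewrite (addMnf hadd) hw -mulrnA.
have E : y *+ (m * ((a + b) %/ m)) + y *+ ((a + b) %% m) = y *+ a + y *+ b.
  by rewrite -!mulrnDr mulnC -divn_eq.
by rewrite -addrA E addrACA.
Qed.
End Ext.


Section Iter.
Variables (N : finZmodType) (s : N -> N).
Hypothesis sadd : forall x y, s (x + y) = s x + s y.

Definition inv (M0 : finZmodType) (f : N -> M0) (sg : M0 -> N) : Prop :=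
  [/\ forall x y, f (x + y) = f x + f y, injective f,
      forall x y, sg (x + y) = sg x + sg y, forall x, sg (f x) = s x &
      #|[set u | sg u == 0]| = #|[set x | s x == 0]|].

Lemma iter_step (M0 : finZmodType) f sg : @inv M0 f sg -> sg @: setT != setT ->
  exists (M1 : finZmodType) (f1 : N -> M1) (sg1 : M1 -> N),
    inv f1 sg1 /\ (#|sg @: setT| < #|sg1 @: setT|)%N.
Proof.
move=> [fadd finj sgadd sgf hker] hL.
set L := sg @: setT.
have /subsetPn [y _ yL] : ~~ ([set: N] \subset L) by rewrite subTset.
have Pex : exists m, (0 < m)%N && (y *+ m \in L).
  exists #|N|; rewrite mulr_card; apply/andP; split.
    by apply/card_gt0P; exists 0.
  by apply/imsetP; exists 0 => //; rewrite (add0f sgadd).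
case: (ex_minnP Pex) => m0 /andP[m0pos m0L] m0min.
case: m0 m0pos m0L m0min => // d _ dL dmin.
have d1 : (0 < d)%N.
  case: d dL dmin => // dL _; by rewrite mulr1n (negbTE yL) in dL.
case/imsetP: dL => w _ hw.
exists (extT d w), (fun x => ext_in d w (f x)), (fun u : extT d w => sg u.1 + y *+ nat_of_ord u.2).
split; first split.
- by move=> a b; rewrite fadd ext_in_add.
- by move=> a b /ext_in_inj /finj.
- by apply: ext_sig_add => //; rewrite hw.
- by move=> x; rewrite /= addr0 sgf.
- rewrite -hker.
  have -> : [set u : extT d w | sg u.1 + y *+ u.2 == 0] =
            ext_in d w @: [set u | sg u == 0].
    apply/setP => -[x a]; rewrite inE /=; apply/idP/imsetP.
      move=> /eqP h.
      have a0 : nat_of_ord a = 0%N.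
        apply/eqP; rewrite -leqn0 leqNgt; apply/negP => apos.
        have : y *+ a \in L.
          apply/imsetP; exists (- x) => //; rewrite (addNf sgadd).
          by apply/eqP; rewrite -addr_eq0 addrC h.
        move=> yaL; have := dmin a; rewrite apos yaL => /(_ isT).
        by rewrite leqNgt ltn_ord.
      exists x; first by rewrite inE; move: h; rewrite a0 mulr0n addr0 => ->.
      by congr (_, _); apply: val_inj.
    by case=> x'; rewrite inE => hx' [-> ->]; rewrite /= mulr0n addr0.
  by rewrite card_imset //; apply: ext_in_inj.
- apply: proper_card; apply/properP; split.
    apply/subsetP => z /imsetP [a _ ->]; apply/imsetP; exists (ext_in d w a) => //.
    by rewrite /= addr0.
  exists y; last by [].
  apply/imsetP; exists (0, Ordinal (d1 : (1 < d.+1)%N)); first by rewrite inE.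
  by rewrite /= (add0f sgadd) add0r mulr1n.
Qed.

Lemma iter k : forall (M0 : finZmodType) f sg, @inv M0 f sg ->
  (#|N| - #|sg @: setT| <= k)%N ->
  exists (M1 : finZmodType) (f1 : N -> M1) (sg1 : M1 -> N),
    inv f1 sg1 /\ sg1 @: setT = setT.
Proof.
elim: k => [|k IH] M0 f sg hinv hk.
  case: (boolP (sg @: setT == setT)) => [/eqP E|hL]; first by exists M0, f, sg.
  have := proper_card (_ : sg @: setT \proper setT); rewrite properT cardsT => /(_ hL).
  by rewrite -subn_gt0 (leqNgt 1) ltnS leqn0 in hk *; rewrite (eqP hk).
case: (boolP (sg @: setT == setT)) => [/eqP E|hL]; first by exists M0, f, sg.
have [M1 [f1 [sg1 [hinv1 hlt]]]] := iter_step hinv hL.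
apply: (IH M1 f1 sg1 hinv1).
have : (#|sg1 @: setT| <= #|N|)%N by rewrite -cardsT subset_leq_card // subsetT.
move: hk hlt; set a := #|sg @: setT|; set b := #|sg1 @: setT|; set c := #|N|.
move=> hk hlt hb; lia.
Qed.
End Iter.

Section LBasic.
Variable M : LMod.
Implicit Types x y : lcar M.
Lemma tD x y : tmap (x + y) = tmap x + tmap y. Proof. exact: tmap_add. Qed.
Lemma t0 : tmap (0 : lcar M) = 0. Proof. by rewrite (add0f tD). Qed.
Lemma tN x : tmap (- x) = - tmap x. Proof. by rewrite (addNf tD). Qed.
Lemma tB x y : tmap (x - y) = tmap x - tmap y. Proof. by rewrite (addBf tD). Qed.
Lemma t_inj : injective (@tmap M). Proof. exact: bij_inj (tmap_bij M). Qed.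
Lemma sD x y : omt (x + y) = omt x + omt y.
Proof. by rewrite /omt tD opprD addrACA. Qed.
Lemma s0 : omt (0 : lcar M) = 0. Proof. by rewrite (add0f sD). Qed.
Lemma sN x : omt (- x) = - omt x. Proof. by rewrite (addNf sD). Qed.
Lemma sB x y : omt (x - y) = omt x - omt y. Proof. by rewrite (addBf sD). Qed.
Lemma st x : omt (tmap x) = tmap (omt x). Proof. by rewrite /omt tB. Qed.
Lemma tE x : tmap x = x - omt x. Proof. by rewrite /omt opprB addrC subrK. Qed.
Lemma imBP y : reflect (exists x, y = omt x) (y \in imB M).
Proof. by apply: (iffP imsetP) => [[x _ ->]|[x ->]]; exists x. Qed.
Lemma imB_omt x : omt x \in imB M. Proof. by apply/imBP; exists x. Qed.
Lemma imB0 : 0 \in imB M. Proof. by rewrite -s0 imB_omt. Qed.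
Lemma imBB : {in imB M &, forall x y, x - y \in imB M}.
Proof. by move=> x y /imBP[a ->] /imBP[b ->]; rewrite -sB imB_omt. Qed.
Lemma imBD : {in imB M &, forall x y, x + y \in imB M}.
Proof. by move=> x y /imBP[a ->] /imBP[b ->]; rewrite -sD imB_omt. Qed.
Lemma imBN : {in imB M, forall x, - x \in imB M}.
Proof. by move=> x /imBP[a ->]; rewrite -sN imB_omt. Qed.
Lemma imBt : {in imB M, forall x, tmap x \in imB M}.
Proof. by move=> x /imBP[a ->]; rewrite -st imB_omt. Qed.
Lemma card_lmod : #|lcar M| = (#|imB M| * #|[set x : lcar M | omt x == 0%R]|)%N.
Proof.
have := card_ker sD (S := setT) (in_setT 0) (fun x y _ _ => in_setT (x - y)).
rewrite cardsT => ->; congr (_ * _)%N; apply: eq_card => z; last by rewrite !inE.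
apply/idP/idP; first by move/imsetP => [a _ ->]; apply: imB_omt.
by move/imBP => [a ->]; apply/imsetP; exists a.
Qed.
End LBasic.

Lemma fiberM (M : LMod) (x0 : lcar M) :
  #|[set x : lcar M | omt x == omt x0]| = #|[set x : lcar M | omt x == 0]|.
Proof.
have := fiber_card (@sD M) (S := setT) (in_setT 0) (fun x y _ _ => in_setT (x - y)) (in_setT x0).
have E1 : [set x in [set: lcar M] | omt x == omt x0] = [set x | omt x == omt x0].
  by apply/setP => z; rewrite !inE.
have E2 : [set x in [set: lcar M] | omt x == 0] = [set x | omt x == 0].
  by apply/setP => z; rewrite !inE.
by rewrite E1 E2.
Qed.

Definition simg (M M' : LMod) (g : lcar M -> lcar M') :=
 [/\ {in imB M &, forall x y, g (x + y) = g x + g y},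
     {in imB M, forall x, g (tmap x) = tmap (g x)},
     {in imB M &, injective g} &
     g @: imB M = imB M'].

Lemma qiso_simg (M M' : LMod) : qiso (@alex M) (@alex M') -> exists g, @simg M M' g.
Proof.
case=> F [[Finv FK FK'] Fh].
set c := F 0; pose F0 x := F x - c.
have alex0 (x : lcar M) : alex x 0 = tmap x by rewrite /alex s0 addr0.
have alex0' (y : lcar M) : alex 0 y = omt y by rewrite /alex t0 add0r.
have alex0M (x : lcar M') : alex x 0 = tmap x by rewrite /alex s0 addr0.
have alex0M' (y : lcar M') : alex 0 y = omt y by rewrite /alex t0 add0r.
have F0h x y : F0 (alex x y) = alex (F0 x) (F0 y).
  have Hc : tmap c + omt c = c by rewrite /omt addrC subrK.
  by rewrite /F0 Fh /alex tB sB -[in LHS]Hc opprD addrACA.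
have F00 : F0 0 = 0 by rewrite /F0 subrr.
have F0t x : F0 (tmap x) = tmap (F0 x) by rewrite -alex0 F0h F00 alex0M.
have F0s y : F0 (omt y) = omt (F0 y) by rewrite -alex0' F0h F00 alex0M'.
have [tinv tK tK'] := tmap_bij M.
have F0add a b : b \in imB M -> F0 (a + b) = F0 a + F0 b.
  move=> /imBP[y ->]; have -> : a = tmap (tinv a) by rewrite tK'.
  by rewrite -[tmap _ + _]/(alex (tinv a) y) F0h F0t F0s.
have F0inj : injective F0.
  by move=> x y; rewrite /F0 => /addIr /(can_inj FK).
exists F0; split.
- by move=> x y _ yS; apply: F0add.
- by move=> x _; apply: F0t.
- by move=> x y _ _; apply: F0inj.
apply/setP => z; apply/imsetP/imBP.
  by case=> x /imBP[y ->] ->; exists (F0 y); rewrite F0s.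
case=> x ->; exists (omt (Finv (x + c))); first exact: imB_omt.
by rewrite F0s /F0 FK' addrK.
Qed.

Lemma simg_qiso (M M' : LMod) (g : lcar M -> lcar M') :
  #|lcar M| = #|lcar M'| -> simg g -> qiso (@alex M) (@alex M').
Proof.
move=> hcard [gadd gt ginj gim].
have g0 : g 0 = 0.
  by apply/(addrI (g 0)); rewrite -gadd ?imB0 // !addr0.
have gN : {in (imB M), forall x, g (- x) = - g x}.
  by move=> x xS; apply/(addrI (g x)); rewrite -gadd ?imBN // !subrr g0.
have gB : {in (imB M) &, forall x y, g (x - y) = g x - g y}.
  by move=> x y xS yS; rewrite gadd ?imBN // gN.
have gs : {in (imB M), forall x, g (omt x) = omt (g x)}.
  by move=> x xS; rewrite /omt gB ?imBt // gt.
have gS : {in (imB M), forall x, g x \in (imB M')} by move=> x xS; rewrite -gim; apply: imset_f.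
have cS : #|(imB M)| = #|(imB M')| by rewrite -gim card_in_imset.
have hk : #|[set x : lcar M | omt x == 0]| = #|[set x : lcar M' | omt x == 0]|.
  apply/eqP; rewrite -(eqn_pmul2l (_ : 0 < #|(imB M)|)%N); last by apply/card_gt0P; exists 0; apply: imB0.
  by rewrite -card_lmod cS -card_lmod hcard.
pose inv (A : {set lcar M}) (f : lcar M -> lcar M') :=
  [/\ {in A, forall x b, b \in (imB M) -> x + b \in A},
      {in A, forall x b, b \in (imB M) -> f (x + b) = f x + g b},
      {in A, forall x, omt (f x) = g (omt x)} & {in A &, injective f}].
have grow : forall k A f, inv A f -> (#|~: A| <= k)%N -> exists f, inv setT f.
  elim=> [|k IH] A f hinv hk'.
    exists f; suff E : A = setT by rewrite -E.
    by apply/setP => x; move: hk'; rewrite leqn0 cards_eq0 => /eqP /setP /(_ x); rewrite !inE => /negbFE ->.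
  case: (boolP (A == setT)) => [/eqP E | hA]; first by exists f; rewrite -E.
  have /subsetPn [a _ aA] : ~~ ([set: lcar M] \subset A) by rewrite subTset.
  case: hinv => hi hii hiii hiv.
  have [a' a'F a'A] : exists2 a', omt a' == g (omt a) & a' \notin f @: A.
    apply/exists_inP; apply: contraT; rewrite negb_exists_in => /forall_inP H.
    set F := [set x | omt x == omt a]; set F' := [set x' | omt x' == g (omt a)].
    have sub : F' \subset f @: (F :&: A).
      apply/subsetP => x' x'F'; rewrite inE in x'F'.
      have /negbNE/imsetP [x xA Ex] := H x' x'F'.
      rewrite Ex (hiii x xA) in x'F' *; apply: imset_f; rewrite !inE xA andbT.
      by apply/eqP/ginj; rewrite ?imB_omt //; apply/eqP.
    have lt : (#|F :&: A| < #|F|)%N.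
      apply: proper_card; apply/properP; split; first exact: subsetIl.
      by exists a; rewrite !inE ?eqxx // (negbTE aA) andbF.
    have cF : #|F| = #|F'|.
      rewrite /F /F'; have /imBP [x0 ->] : g (omt a) \in (imB M') by apply/gS/imB_omt.
      by rewrite !fiberM hk.
    have := leq_trans (subset_leq_card sub) (leq_imset_card _ _).
    by rewrite -cF leqNgt lt.
  pose f2 x := if x \in A then f x else if x - a \in (imB M) then a' + g (x - a) else f x.
  pose A2 := A :|: [set x | x - a \in (imB M)].
  apply: (IH A2 f2).
    split.
    - move=> x; rewrite /A2 !inE => /orP [xA | xa] b bS; rewrite !inE; first by rewrite hi.
      by rewrite addrAC imBD ?orbT.
    - move=> x; rewrite /f2 /A2 !inE => /orP [xA | xa] b bS; first by rewrite hi // xA hii.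
      have xA : x \notin A.
        by apply: contra aA => xA; rewrite -[a](addrNK x) addrC hi // -opprB imBN.
      have xbA : x + b \notin A.
        by apply: contra xA => xbA; rewrite -(addrK b x) hi // imBN.
      have xba : x + b - a \in imB M by rewrite addrAC imBD.
      by rewrite (negbTE xA) (negbTE xbA) xa xba addrAC (gadd _ _ xa bS) addrA.
    - move=> x; rewrite /f2 /A2 !inE => /orP [xA | xa]; first by rewrite xA hiii.
      case: ifP => xA; first by rewrite hiii.
      rewrite xa sD (eqP a'F) -(gs _ xa) -(gadd _ _ (imB_omt a) (imB_omt (x - a))).
      by rewrite -sD addrC subrK.
    - have key : forall x y, x \in A -> y \notin A -> y - a \in (imB M) -> f x != a' + g (y - a).
        move=> x y xA yA ya; apply: contra a'A => /eqP E.
        apply/imsetP; exists (x - (y - a)); first by rewrite hi // imBN.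
        by rewrite hii ?imBN // gN // E addrK.
      move=> x y; rewrite /f2 /A2 !inE => hx hy.
      case: (boolP (x \in A)) => xA; case: (boolP (y \in A)) => yA.
      + exact: hiv.
      + have ya : y - a \in imB M by move: hy; rewrite (negbTE yA).
        by rewrite ya => E; move: (key x y xA yA ya); rewrite E eqxx.
      + have xa : x - a \in imB M by move: hx; rewrite (negbTE xA).
        by rewrite xa => E; move: (key y x yA xA xa); rewrite -E eqxx.
      + have ya : y - a \in imB M by move: hy; rewrite (negbTE yA).
        have xa : x - a \in imB M by move: hx; rewrite (negbTE xA).
        rewrite xa ya => /addrI /ginj E.
        by apply/(addIr (- a))/E.
  have : (#|~: A2| < #|~: A|)%N.
    apply: proper_card; apply/properP; split.
      by apply/subsetP => x; rewrite !inE negb_or => /andP [].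
    by exists a; rewrite !inE ?aA // subrr imB0 orbT.
  by move=> lt; rewrite -ltnS; apply: leq_trans lt hk'.
have [f [_ hii hiii hiv]] : exists f, inv setT f.
  apply: (grow #|~: (set0 : {set lcar M})| set0 (fun _ => 0)) => //.
  by split => x; rewrite inE.
exists f; split.
  apply: inj_card_bij; last by rewrite hcard.
  by move=> x y E; apply: hiv; rewrite ?inE.
move=> x y; rewrite /alex !tE.
have -> : x - omt x + omt y = x + (omt y - omt x) by rewrite addrAC -addrA.
rewrite (hii x (in_setT x) _ (imBB (imB_omt y) (imB_omt x))).
rewrite (gB _ _ (imB_omt y) (imB_omt x)) -(hiii y (in_setT y)) -(hiii x (in_setT x)).
by rewrite addrA addrAC.
Qed.

Definition emb (N M : LMod) (f : lcar N -> lcar M) :=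
  [/\ lhom f, injective f & f @: setT = imB M].

Lemma emb_in (N M : LMod) (f : lcar N -> lcar M) x : emb f -> f x \in imB M.
Proof. by case=> _ _ <-; apply: imset_f. Qed.

Lemma emb_card (N M : LMod) (f : lcar N -> lcar M) : emb f -> #|lcar N| = #|imB M|.
Proof. by case=> _ finj <-; rewrite card_imset // cardsT. Qed.

Lemma emb_pick (N M : LMod) (f : lcar N -> lcar M) y : emb f -> y \in imB M ->
  f (odflt 0 [pick x | f x == y]) = y.
Proof.
case=> _ _ fim; rewrite -fim => /imsetP [x0 _ ->].
by case: pickP => [x /eqP // | /(_ x0)]; rewrite eqxx.
Qed.

Lemma emb_simg_liso (N M N' M' : LMod) (fN : lcar N -> lcar M) (fN' : lcar N' -> lcar M') (g : lcar M -> lcar M') :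
  emb fN -> emb fN' -> simg g -> liso N N'.
Proof.
move=> eN eN' [gadd gt ginj gim].
have eN0 := eN; have eN'0 := eN'.
case: eN => [[fadd ft] finj fim]; case: eN' => [[fadd' ft'] finj' fim'].
pose h x := odflt 0 [pick y | fN' y == g (fN x)].
have gS x : g (fN x) \in imB M' by rewrite -gim; apply: imset_f; apply: emb_in.
have hE x : fN' (h x) = g (fN x) by apply: emb_pick.
exists h; split; first split.
- by move=> x y; apply: finj'; rewrite fadd' !hE fadd gadd ?(emb_in _ eN0).
- by move=> x; apply: finj'; rewrite ft' !hE ft gt ?(emb_in _ eN0).
apply: inj_card_bij.
  by move=> x y E; apply: finj; apply: ginj; rewrite ?(emb_in _ eN0) // -!hE E.
by rewrite (emb_card eN0) (emb_card eN'0) -gim card_in_imset.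
Qed.

Lemma emb_liso_simg (N M N' M' : LMod) (fN : lcar N -> lcar M) (fN' : lcar N' -> lcar M') :
  emb fN -> emb fN' -> liso N N' -> exists g : lcar M -> lcar M', simg g.
Proof.
move=> eN eN' [phi [[padd pt] [phinv pK pK']]].
have eN0 := eN; have eN'0 := eN'.
case: eN => [[fadd ft] finj fim]; case: eN' => [[fadd' ft'] finj' fim'].
pose fi x := odflt 0 [pick y | fN y == x].
have fiE x : x \in imB M -> fN (fi x) = x by move=> xS; apply: emb_pick.
have fiK y : fi (fN y) = y by apply: finj; rewrite fiE ?(emb_in _ eN0).
exists (fun x => fN' (phi (fi x))); split.
- move=> x y xS yS /=.
  have -> : fi (x + y) = fi x + fi y.
    by apply: finj; rewrite fadd !fiE ?imBD.
  by rewrite padd fadd'.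
- move=> x xS /=.
  have -> : fi (tmap x) = tmap (fi x).
    by apply: finj; rewrite ft !fiE ?imBt.
  by rewrite pt ft'.
- move=> x y xS yS /= /finj' /(can_inj pK) E.
  by rewrite -(fiE x xS) -(fiE y yS) E.
apply/setP => z; apply/imsetP/idP.
  by case=> x _ ->; apply: emb_in.
rewrite -fim' => /imsetP [n' _ ->].
exists (fN (phinv n')); first by apply: emb_in.
by rewrite fiK pK'.
Qed.

Lemma exists_ext (N : LMod) (q : nat) : (0 < q)%N ->
  exists (M : LMod) (f : lcar N -> lcar M),
    emb f /\ #|lcar M| = (#|lcar N| * #|[set x : lcar N | omt x == 0%R]| * q)%N.
Proof.
move=> q0.
have base : @inv (lcar N) (@omt N) (lcar N) id (@omt N).
  by split => //; apply: sD.
have [M1 [f1 [sg1 [[f1add f1inj sg1add sg1f hker] sg1surj]]]] :=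
  iter base (leq_subr _ _).
pose M2 := @extT M1 q.-1 0.
pose f2 (x : lcar N) : M2 := ext_in q.-1 0 (f1 x).
pose sg2 (u : M2) : lcar N := sg1 u.1.
have f2add x y : f2 (x + y) = f2 x + f2 y by rewrite /f2 f1add ext_in_add.
have sg2add u v : sg2 (u + v) = sg2 u + sg2 v.
  by rewrite /sg2 ext_addE /ext_add /= mul0rn addr0 sg1add.
have sg2f x : sg2 (f2 x) = omt x by rewrite /sg2 /f2 /= sg1f.
pose tM (u : M2) := u - f2 (sg2 u).
have tMadd u v : tM (u + v) = tM u + tM v.
  by rewrite /tM sg2add f2add opprD addrACA.
have tMinj : injective tM.
  move=> u v E; apply/eqP; rewrite -subr_eq0; apply/eqP.
  have : tM (u - v) = 0 by rewrite (addBf tMadd) E subrr.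
  move: (u - v) => z; rewrite /tM => /eqP; rewrite subr_eq0 => /eqP hz.
  have hy : sg2 z = omt (sg2 z) by rewrite {1}hz sg2f.
  have : tmap (sg2 z) = 0 by rewrite tE -hy subrr.
  rewrite -(t0 N) => /t_inj h0.
  by rewrite hz h0 /f2 (add0f f1add).
pose M : LMod := @LModPack M2 tM tMadd (injF_bij tMinj).
have omtM (u : lcar M) : omt u = f2 (sg2 u) by rewrite /omt /= /tM opprB addrC subrK.
exists M, f2; split; first split.
- split; first exact: f2add.
  by move=> x; rewrite /= /tM sg2f -(addBf f2add) -tE.
- by move=> x y /ext_in_inj /f1inj.
- apply/setP => z; apply/imsetP/imBP.
    case=> x _ ->; have : x \in sg1 @: setT by rewrite sg1surj.
    by case/imsetP => m _ ->; exists (ext_in q.-1 0 m); rewrite omtM.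
  by case=> u ->; exists (sg2 u); rewrite ?omtM.
- have := card_ker sg1add (S := setT) (in_setT 0) (fun x y _ _ => in_setT (x - y)).
  rewrite cardsT sg1surj cardsT => E.
  rewrite /= card_ext (prednK q0) E -hker; congr (_ * _ * _)%N.
  by apply: eq_card => z; rewrite !inE.
Qed.

Definition subT (X : LMod) : Type := {x : lcar X | x \in imB X}.

Section SubL.
Variable X : LMod.
HB.instance Definition _ := Finite.copy (subT X) {x : lcar X | x \in imB X}.

Definition sub_add (u v : subT X) : subT X := exist _ (val u + val v) (imBD (valP u) (valP v)).
Definition sub_zero : subT X := exist _ 0 (imB0 X).
Definition sub_opp (u : subT X) : subT X := exist _ (- val u) (imBN (valP u)).

Lemma sub_addA : associative sub_add.
Proof. by move=> u v w; apply: val_inj; rewrite /= addrA. Qed.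
Lemma sub_addC : commutative sub_add.
Proof. by move=> u v; apply: val_inj; rewrite /= addrC. Qed.
Lemma sub_add0 : left_id sub_zero sub_add.
Proof. by move=> u; apply: val_inj; rewrite /= add0r. Qed.
Lemma sub_addN : left_inverse sub_zero sub_opp sub_add.
Proof. by move=> u; apply: val_inj; rewrite /= addNr. Qed.

HB.instance Definition _ := GRing.isZmodule.Build (subT X) sub_addA sub_addC sub_add0 sub_addN.

Definition sub_t (u : subT X) : subT X := exist _ (tmap (val u)) (imBt (valP u)).
Lemma sub_t_add (u v : subT X) : sub_t (u + v) = sub_t u + sub_t v.
Proof. by apply: val_inj; rewrite /= tD. Qed.
Lemma sub_t_inj : injective sub_t.
Proof. by move=> u v [] /t_inj E; apply: val_inj. Qed.

Definition subL : LMod := @LModPack (subT X) sub_t sub_t_add (injF_bij sub_t_inj).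

Lemma emb_subL : emb (fun u : lcar subL => val u).
Proof.
split; first split.
- by [].
- by [].
- exact: val_inj.
apply/setP => z; apply/imsetP/idP; first by case=> u _ ->; apply: valP.
by move=> zS; exists (exist _ z zS).
Qed.
End SubL.

Lemma emb_Mcond (p n : nat) (Y X : LMod) (e : lcar Y -> lcar X) :
  prime p -> #|lcar X| = (p ^ n)%N -> emb e -> Mcond p n Y.
Proof.
move=> pp cX eY.
have cY := emb_card eY.
have [i _ ci] : exists2 i, (i <= n)%N & #|lcar Y| = (p ^ i)%N.
  by apply/dvdn_pfactor => //; rewrite -cX (card_lmod X) -cY dvdn_mulr.
have [j _ cj] : exists2 j, (j <= i)%N & #|imB Y| = (p ^ j)%N.
  by apply/dvdn_pfactor => //; rewrite -ci (card_lmod Y) dvdn_mulr.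
exists i, j; split => //.
have kle : (#|[set y : lcar Y | omt y == 0%R]| <= #|[set x : lcar X | omt x == 0%R]|)%N.
  case: eY => [[eadd et] einj _].
  rewrite -(card_imset _ einj); apply: subset_leq_card; apply/subsetP => z.
  case/imsetP => y; rewrite !inE => /eqP hy ->.
  have eo : e (omt y) = omt (e y) by rewrite /omt (addBf eadd) et.
  by rewrite -eo hy (add0f eadd).
have H : (p ^ (2 * i) <= p ^ (n + j))%N.
  have e1 : (p ^ (2 * i) = #|lcar Y| * #|lcar Y|)%N by rewrite mul2n -addnn expnD ci.
  have e2 : (p ^ (n + j) = #|lcar X| * #|imB Y|)%N by rewrite expnD cX cj.
  rewrite e1 e2 {1}cY (card_lmod Y) (card_lmod X) [in X in (_ <= X)%N]mulnAC -mulnA.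
  by rewrite leq_mul2l leq_mul2l kle !orbT.
by rewrite leq_exp2l ?prime_gt1 in H.
Qed.

Local Close Scope ring_scope.
Unset Implicit Arguments.
Set Strict Implicit.

Theorem corollary4p4 (p n : nat) (hp : prime p) (hn : (0 < n)%N)
  (I : Type) (N : I -> LMod) (hN : complete_Mset p n N) :
  (forall i, exists (M : LMod) (f : lcar (N i) -> lcar M), good_ext p n f) /\
  (forall (M : I -> LMod) (f : forall i, lcar (N i) -> lcar (M i)),
     (forall i, good_ext p n (f i)) ->
     (forall i j, qiso (@alex (M i)) (@alex (M j)) -> i = j) /\
     (forall X : LMod, #|lcar X| = (p ^ n)%N ->
        exists i, qiso (@alex X) (@alex (M i)))).
Proof.
case: hN => hM hcomp huniq.
split.

  move=> i; have [a [b [ca [cb hab]]]] := hM i.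
  have q0 : (0 < p ^ (n + b - 2 * a))%N by rewrite expn_gt0 prime_gt0.
  have [M [f [[fh finj fim] cM]]] := exists_ext (N i) q0.
  exists M, f; split => //.
  have ck := card_lmod (N i); rewrite ca cb in ck.
  apply/eqP; rewrite -(eqn_pmul2l (_ : 0 < p ^ b)%N); last by rewrite expn_gt0 prime_gt0.
  rewrite cM ca mulnA mulnCA -ck -!expnD; apply/eqP; congr (p ^ _)%N; lia.
move=> M f hf.
have eNM i : emb (f i) by case: (hf i) => fh finj _ fim; split.
have cM i : #|lcar (M i)| = (p ^ n)%N by case: (hf i).
split.

  move=> i j /qiso_simg [g sg]; apply: huniq.
  exact: emb_simg_liso (eNM i) (eNM j) sg.
move=> X cX.
have eY := emb_subL X.
have [i hi] := hcomp _ (emb_Mcond hp cX eY).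
exists i; have [g sg] := emb_liso_simg eY (eNM i) hi.
by apply: simg_qiso sg; rewrite cX cM.
Qed.
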